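(* Let $\mathbb{C}$ be a category of interest and let $A$ be an object of $\mathbb{C}$. Then $A$ has an actor in $\mathbb{C}$ if and only if the semidirect product $\mathfrak{B}(A)\ltimes A$ (formed with respect to the canonical action of $\mathfrak{B}(A)$ on $A$) is an object of $\mathbb{C}$. If this is the case, then $d:A\to\mathfrak{B}(A)$ is an actor of $A$, i.e. $\mathrm{Actor}(A)=\mathfrak{B}(A)$.
   Context: Category of interest. A category of groups with operations is a variety of universal algebras with a set of operations $\Omega=\Omega_0\cup\Omega_1\cup\Omega_2$ ($\Omega_i$ = set of $i$-ary operations) and a set of identities $\mathbb{E}$ such that: $\mathbb{E}$ contains the group laws; the group operations, written additively $0,-,+$ (addition not necessarily commutative), lie in $\Omega_0,\Omega_1,\Omega_2$ respectively, and $\Omega_0=\{0\}$; putting $\Omega_2'=\Omega_2\setminus\{+\}$ and $\Omega_1'=\Omega_1\setminus\{-\}$, whenever $*\in\Omega_2'$ also $*^\circ\in\Omega_2'$, where $x*^\circ y=y*x$; $\mathbb{E}$ contains $x*(y+z)=x*y+x*z$ for each $*\in\Omega_2'$, and $\omega(x+y)=\omega(x)+\omega(y)$, $\omega(x)*y=\omega(x*y)$ for each $\omega\in\Omega_1'$, $*\in\Omega_2'$. A category of interest $\mathbb{C}=(\Omega,\mathbb{E})$ is such a variety which also satisfies: (Axiom 1) $x_1+(x_2*x_3)=(x_2*x_3)+x_1$ for each $*\in\Omega_2'$; (Axiom 2) for each ordered pair $( *,\bar* )\in\Omega_2'\times\Omega_2'$ there is a word $W$ with $(x_1*x_2)\bar*x_3=W\big(x_1(x_2x_3),x_1(x_3x_2),(x_2x_3)x_1,(x_3x_2)x_1,x_2(x_1x_3),x_2(x_3x_1),(x_1x_3)x_2,(x_3x_1)x_2\big)$,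 each juxtaposition standing for some operation in $\Omega_2'$; the right-hand side is denoted $W(x_1,x_2;x_3;*,\bar* )$. Let $\mathbb{E}_G\subseteq\mathbb{E}$ consist of the group laws together with the identities $x*(y+z)=x*y+x*z$, $\omega(x+y)=\omega(x)+\omega(y)$, $\omega(x)*y=\omega(x*y)$, and let $\mathbb{C}_G$ be the variety $(\Omega,\mathbb{E}_G)$; $\mathbb{C}$ is a full subcategory of $\mathbb{C}_G$. Actions. For objects $A,B$ of $\mathbb{C}_G$, a set of actions of $B$ on $A$ is a family of maps $B\times A\to A$, $(b,a)\mapsto b\cdot a$ and $(b,a)\mapsto b*a$ for each $*\in\Omega_2'$ (one writes $a*b:=b*^\circ a$). Let $\mathcal V$ be $\mathbb{C}$ or $\mathbb{C}_G$. A split extension $0\to A\to E\xrightarrow{p}B\to 0$ in $\mathcal V$ ($p$ surjective with kernel $A$, and a morphism $s$ with $ps=1_B$) induces the actions $b\cdot a=s(b)+a-s(b)$, $b*a=s(b)*a$; actions arising in this way are called derived actions in $\mathcal V$. Given a set of actions, $B\ltimes A$ is the $\Omega$-algebra on the set $B\times A$ with $(b',a')+(b,a)=(b'+b,a'+b'\cdot a)$ and $(b',a')*(b,a)=(b'*b,\ a'*a+a'*b+b'*a)$ for $*\in\Omega_2'$; for $A,B\in\mathcal V$, a set of actions is a set of derived actions in $\mathcal V$ iff $B\ltimes A\in\mathcal V$. Crossed modules and actors. A crossed module in $\mathcal V$ is a morphism $\partial:C_1\to C_0$ in $\mathcal V$ together with a derived action of $C_0$ on $C_1$ in $\mathcal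 V$ such that for all $r\in C_0$, $c,c'\in C_1$, $*\in\Omega_2'$: $\partial(r\cdot c)=r+\partial(c)-r$; $\partial(c)\cdot c'=c+c'-c$; $\partial(c)*c'=c*c'$; $\partial(r*c)=r*\partial(c)$ and $\partial(c*r)=\partial(c)*r$. For $A\in\mathbb{C}$, an actor of $A$ is a crossed module $\partial:A\to\mathrm{Actor}(A)$ in $\mathbb{C}$ such that for every $C\in\mathbb{C}$ and every derived action of $C$ on $A$ in $\mathbb{C}$ there is a unique morphism $\varphi:C\to\mathrm{Actor}(A)$ in $\mathbb{C}$ with $c\cdot a=\varphi(c)\cdot a$ and $c*a=\varphi(c)*a$ for all $c\in C$, $a\in A$, $*\in\Omega_2'$. The object $\mathfrak{B}(A)$. Fix $A\in\mathbb{C}$ and let $(B_j)_{j\in J}$ range over all objects of $\mathbb{C}$ equipped with a derived action on $A$ in $\mathbb{C}$ (one index for each split extension of $A$ in $\mathbb{C}$; the same object may occur with different actions). Consider families $x$ of maps $A\to A$ consisting of a map $a\mapsto x\cdot a$ and maps $a\mapsto x*a$ ($*\in\Omega_2'$). For $b\in B_j$ let $\mathbf{b}$ be the family $a\mapsto b\cdot a$, $a\mapsto b*a$, and let $\mathbb{B}$ be the set of all such $\mathbf b$. Operations on families: for $\mathbf{b}_i,\mathbf{b}_k\in\mathbb{B}$ and $*\in\Omega_2'$, $(\mathbf b_i*\mathbf b_k)\cdot a=a$ and $(\mathbf b_i*\mathbf b_k)\bar*a=W(b_i,b_k;a;*,\bar* )$ for $\bar*\in\Omega_2'$ (the Axiom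 2 word, each of whose terms involves only one element of $B_i$ or $B_k$ and one element of $A$ and is evaluated through the given actions), iterated products being defined inductively in the same way via Axiom 2; $(x+y)\cdot a=x\cdot(y\cdot a)$ and $(x+y)*a=x*a+y*a$; for $\omega\in\Omega_1'$, $\omega(\mathbf b_k)$ is the family of $\omega(b_k)\in B_k$, $\omega(x*y)=\omega(x)*y$, and $\omega$ is additive; $(-\mathbf b_k)\cdot a=(-b_k)\cdot a$, $(-x)*a=-(x*a)$, $(-x)\cdot a=a$ when $x$ is a product, and $-(x_1+\dots+x_n)=-x_n-\dots-x_1$. $\mathfrak{B}(A)$ is the set of all families obtained from $\mathbb{B}$ by iterating these operations, modulo the equivalence $x\sim y$ iff $x\cdot a=y\cdot a$, $x*a=y*a$ and $(\omega_1\cdots\omega_n x)\cdot a=(\omega_1\cdots\omega_n y)\cdot a$ for all $a\in A$, $*\in\Omega_2'$, $n\ge1$, $\omega_1,\dots,\omega_n\in\Omega_1'$. It is an $\Omega$-algebra and acts canonically on $A$ by $(x,a)\mapsto x\cdot a$, $(x,a)\mapsto x*a$. The map $d:A\to\mathfrak{B}(A)$ sends $a$ to the family $d(a)\cdot a'=a+a'-a$, $d(a)*a'=a*a'$. *)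

(* Defs.v *)
From Stdlib Require Import List ClassicalEpsilon.
Import ListNotations.
Set Implicit Arguments.

(* Omega_0 = {0}, Omega_1 = {-} + op1, Omega_2 = {+} + op2.
   [flip o] is the operation o° (x o° y = y o x), required to lie in op2. *)
Record signature := Signature {
  op1 : Type;
  op2 : Type;
  flip : op2 -> op2 }.

Inductive term (S : signature) : Type :=
| tvar : nat -> term S
| tzero : term S
| tneg : term S -> term S
| tadd : term S -> term S -> term S
| tun : op1 S -> term S -> term S
| tbin : op2 S -> term S -> term S -> term S.
Arguments tzero {S}.

Record alg (S : signature) := Alg {
  car :> Type;
  azero : car;
  aneg : car -> car;
  aadd : car -> car -> car;
  aun : op1 S -> car -> car;
  abin : op2 S -> car -> car -> car }.
Arguments azero {S a}.
Arguments aneg {S a}.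
Arguments aadd {S a}.
Arguments aun {S a}.
Arguments abin {S a}.

Fixpoint teval (S : signature) (A : alg S) (v : nat -> A) (t : term S) : A :=
  match t with
  | tvar _ n => v n
  | tzero => azero
  | tneg t => aneg (teval A v t)
  | tadd t u => aadd (teval A v t) (teval A v u)
  | tun w t => aun w (teval A v t)
  | tbin o t u => abin o (teval A v t) (teval A v u)
  end.
Arguments teval {S} A v t.

Definition holds (S : signature) (A : alg S) (e : term S * term S) : Prop :=
  forall v : nat -> A, teval A v (fst e) = teval A v (snd e).

Definition models (S : signature) (E : term S * term S -> Prop) (A : alg S) : Prop :=
  forall e, E e -> holds A e.

Definition x1 {S} : term S := tvar S 0.
Definition x2 {S} : term S := tvar S 1.
Definition x3 {S} : term S := tvar S 2.

Inductive EG_ident (S : signature) : term S * term S -> Prop :=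
| eg_assoc : EG_ident (tadd (tadd x1 x2) x3, tadd x1 (tadd x2 x3))
| eg_zl : EG_ident (tadd tzero x1, x1)
| eg_zr : EG_ident (tadd x1 tzero, x1)
| eg_nl : EG_ident (tadd (tneg x1) x1, tzero)
| eg_nr : EG_ident (tadd x1 (tneg x1), tzero)
| eg_distr : forall o, EG_ident (tbin o x1 (tadd x2 x3), tadd (tbin o x1 x2) (tbin o x1 x3))
| eg_unadd : forall w, EG_ident (tun w (tadd x1 x2), tadd (tun w x1) (tun w x2))
| eg_unbin : forall w o, EG_ident (tbin o (tun w x1) x2, tun w (tbin o x1 x2)).

(* The eight monomial shapes of Axiom 2, with outer operation p and inner q:
   Sh1: x1 p (x2 q x3)   Sh2: x1 p (x3 q x2)   Sh3: (x2 q x3) p x1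
   Sh4: (x3 q x2) p x1   Sh5: x2 p (x1 q x3)   Sh6: x2 p (x3 q x1)
   Sh7: (x1 q x3) p x2   Sh8: (x3 q x1) p x2 *)
Inductive shape := Sh1 | Sh2 | Sh3 | Sh4 | Sh5 | Sh6 | Sh7 | Sh8.

Inductive wterm (S : signature) : Type :=
| watom : shape -> op2 S -> op2 S -> wterm S
| wzero : wterm S
| wneg : wterm S -> wterm S
| wadd : wterm S -> wterm S -> wterm S
| wun : op1 S -> wterm S -> wterm S.
Arguments wzero {S}.

Definition atom_term (S : signature) (sh : shape) (p q : op2 S) : term S :=
  match sh with
  | Sh1 => tbin p x1 (tbin q x2 x3)
  | Sh2 => tbin p x1 (tbin q x3 x2)
  | Sh3 => tbin p (tbin q x2 x3) x1
  | Sh4 => tbin p (tbin q x3 x2) x1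
  | Sh5 => tbin p x2 (tbin q x1 x3)
  | Sh6 => tbin p x2 (tbin q x3 x1)
  | Sh7 => tbin p (tbin q x1 x3) x2
  | Sh8 => tbin p (tbin q x3 x1) x2
  end.

Fixpoint wterm_term (S : signature) (W : wterm S) : term S :=
  match W with
  | watom _ sh p q => atom_term S sh p q
  | wzero => tzero
  | wneg W => tneg (wterm_term W)
  | wadd W V => tadd (wterm_term W) (wterm_term V)
  | wun w W => tun w (wterm_term W)
  end.

Record CI := {
  ci_sig :> signature;
  ci_E : term ci_sig * term ci_sig -> Prop;
  ci_EG : forall e, EG_ident e -> ci_E e;
  ci_flip : forall o, ci_E (tbin (flip ci_sig o) x1 x2, tbin o x2 x1);
  ci_ax1 : forall (A : alg ci_sig), models ci_E A ->
     forall o, holds A (tadd x1 (tbin o x2 x3), tadd (tbin o x2 x3) x1);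
  (* Axiom 2, with a chosen word W(x1,x2;x3;*,*bar) for each pair *)
  ci_W : op2 ci_sig -> op2 ci_sig -> wterm ci_sig;
  ci_ax2 : forall (A : alg ci_sig), models ci_E A ->
     forall o ob, holds A (tbin ob (tbin o x1 x2) x3, wterm_term (ci_W o ob)) }.

Definition inC (C : CI) (A : alg C) : Prop := models (ci_E C) A.
Arguments inC {C} A.

Definition morph (S : signature) (A B : alg S) (f : A -> B) : Prop :=
  f azero = azero /\ (forall x, f (aneg x) = aneg (f x)) /\
  (forall x y, f (aadd x y) = aadd (f x) (f y)) /\
  (forall w x, f (aun w x) = aun w (f x)) /\
  (forall o x y, f (abin o x y) = abin o (f x) (f y)).
Arguments morph {S A B} f.

(* act_dot b a = b . a ;  act_op o b a = b o a  (and a o b := b o° a). *)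
Record action (S : signature) (B A : alg S) := Action {
  act_dot : B -> A -> A;
  act_op : op2 S -> B -> A -> A }.
Arguments act_dot {S B A}.
Arguments act_op {S B A}.

Definition semidirect (S : signature) (B A : alg S) (act : action B A) : alg S :=
  @Alg S (B * A)%type
    (azero, azero)
    (fun p => (aneg (fst p), aneg (act_dot act (aneg (fst p)) (snd p))))
    (fun p q => (aadd (fst p) (fst q), aadd (snd p) (act_dot act (fst p) (snd q))))
    (fun w p => (aun w (fst p), aun w (snd p)))
    (fun o p q => (abin o (fst p) (fst q),
                   aadd (aadd (abin o (snd p) (snd q)) (act_op act (flip S o) (fst q) (snd p)))
                        (act_op act o (fst p) (snd q)))).
Arguments semidirect {S B A} act.

Definition derived (C : CI) (B A : alg C) (act : action B A) : Prop :=
  exists (E : alg C), inC E /\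
  exists (p : E -> B) (i : A -> E) (s : B -> E),
    morph p /\ morph i /\ morph s /\
    (forall a a', i a = i a' -> a = a') /\
    (forall e, p e = azero <-> exists a, i a = e) /\
    (forall b, p (s b) = b) /\
    (forall b a, i (act_dot act b a) = aadd (aadd (s b) (i a)) (aneg (s b))) /\
    (forall o b a, i (act_op act o b a) = abin o (s b) (i a)).
Arguments derived {C B A} act.

Definition xmod (C : CI) (C1 C0 : alg C) (d : C1 -> C0) (act : action C0 C1) : Prop :=
  inC C1 /\ inC C0 /\ morph d /\ derived act /\
  (forall r c, d (act_dot act r c) = aadd (aadd r (d c)) (aneg r)) /\
  (forall c c', act_dot act (d c) c' = aadd (aadd c c') (aneg c)) /\
  (forall o c c', act_op act o (d c) c' = abin o c c') /\
  (forall o r c, d (act_op act o r c) = abin o r (d c)) /\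
  (forall o c r, d (act_op act (flip C o) r c) = abin o (d c) r).
Arguments xmod {C C1 C0} d act.

Definition is_actor (C : CI) (A Act : alg C) (d : A -> Act) (act : action Act A) : Prop :=
  xmod d act /\
  forall (D : alg C) (actD : action D A), inC D -> derived actD ->
    exists! phi : D -> Act, morph phi /\
      (forall c a, act_dot actD c a = act_dot act (phi c) a) /\
      (forall o c a, act_op actD o c a = act_op act o (phi c) a).
Arguments is_actor {C A Act} d act.

Definition has_actor (C : CI) (A : alg C) : Prop :=
  exists (Act : alg C) (d : A -> Act) (act : action Act A), is_actor d act.
Arguments has_actor {C} A.

(* The data of an element x of B(A): for each list [w1;..;wn] of unary
   operations the map a |-> (w1 (.. (wn x))) . a, and for each binary
   operation o the map a |-> x o a. Two elements are identified iff these
   data coincide (this is exactly the equivalence ~ of the paper). *)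
Definition Sig (C : CI) (A : alg C) : Type :=
  ((list (op1 C) -> A -> A) * (op2 C -> A -> A))%type.
Arguments Sig {C} A.

Definition omegas (S : signature) (B : alg S) (l : list (op1 S)) (b : B) : B :=
  fold_right (fun w b => aun w b) b l.
Arguments omegas {S B} l b.

(* Formal expressions built from the elements b of all B_j (objects of C with
   a derived action on A in C) by the operations of B(A). *)
Inductive Expr (C : CI) (A : alg C) : Type :=
| egen : forall (B : alg C) (act : action B A), inC B -> derived act -> B -> Expr C A
| ezero : Expr C A
| eadd : Expr C A -> Expr C A -> Expr C A
| eneg : Expr C A -> Expr C A
| eun : op1 C -> Expr C A -> Expr C A
| ebin : op2 C -> Expr C A -> Expr C A -> Expr C A.
Arguments Expr {C} A.
Arguments ezero {C A}.
Arguments eadd {C A}.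
Arguments eneg {C A}.
Arguments eun {C A}.
Arguments ebin {C A}.
Arguments egen {C A B}.

Definition genSig (C : CI) (A B : alg C) (act : action B A) (b : B) : Sig A :=
  (fun l a => act_dot act (omegas l b) a, fun o a => act_op act o b a).
Arguments genSig {C A B} act b.

Definition zeroSig (C : CI) (A : alg C) : Sig A :=
  (fun _ a => a, fun _ _ => azero).
Arguments zeroSig {C} A.

Definition addSig (C : CI) (A : alg C) (X Y : Sig A) : Sig A :=
  (fun l a => fst X l (fst Y l a), fun o a => aadd (snd X o a) (snd Y o a)).
Arguments addSig {C A} X Y.

(* Evaluation of an Axiom-2 word W(x,y;a) through the star-maps of x and y. *)
Definition atom_eval (C : CI) (A : alg C) (sh : shape) (p q : op2 C)
  (SX SY : op2 C -> A -> A) (a : A) : A :=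
  match sh with
  | Sh1 => SX p (SY q a)
  | Sh2 => SX p (SY (flip C q) a)
  | Sh3 => SX (flip C p) (SY q a)
  | Sh4 => SX (flip C p) (SY (flip C q) a)
  | Sh5 => SY p (SX q a)
  | Sh6 => SY p (SX (flip C q) a)
  | Sh7 => SY (flip C p) (SX q a)
  | Sh8 => SY (flip C p) (SX (flip C q) a)
  end.
Arguments atom_eval {C A} sh p q SX SY a.

Fixpoint weval (C : CI) (A : alg C) (W : wterm C)
  (SX SY : op2 C -> A -> A) (a : A) : A :=
  match W with
  | watom _ sh p q => atom_eval sh p q SX SY a
  | wzero => azero
  | wneg W => aneg (weval C A W SX SY a)
  | wadd W V => aadd (weval C A W SX SY a) (weval C A V SX SY a)
  | wun w W => aun w (weval C A W SX SY a)
  end.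
Arguments weval {C} A W SX SY a.

Definition binSig (C : CI) (A : alg C) (o : op2 C) (X Y : Sig A) : Sig A :=
  (fun _ a => a, fun ob a => weval A (ci_W C o ob) (snd X) (snd Y) a).
Arguments binSig {C A} o X Y.

(* sigU l x = data of w_l(x); negU l x = data of w_l(-x). *)
Fixpoint sigU (C : CI) (A : alg C) (l : list (op1 C)) (x : Expr A) {struct x} : Sig A :=
  match x with
  | egen act _ _ b => genSig act (omegas l b)
  | ezero => zeroSig A
  | eadd x y => addSig (sigU l x) (sigU l y)
  | eneg x => negU l x
  | eun w x => sigU (l ++ [w]) x
  | ebin o x y => binSig o (sigU l x) (sigU nil y)
  end
with negU (C : CI) (A : alg C) (l : list (op1 C)) (x : Expr A) {struct x} : Sig A :=
  match x with
  | egen act _ _ b => genSig act (omegas l (aneg b))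
  | ezero => zeroSig A
  | eadd x y => addSig (negU l y) (negU l x)
  | eneg x => sigU l x
  | eun w x => negU (l ++ [w]) x
  | ebin o x y =>
      (fun _ a => a,
       fun ob a => aneg (snd (binSig o (sigU l x) (sigU nil y)) ob a))
  end.
Arguments sigU {C A} l x.
Arguments negU {C A} l x.

Definition sigE (C : CI) (A : alg C) (x : Expr A) : Sig A := sigU nil x.
Arguments sigE {C A} x.

(* Carrier of B(A): expressions modulo ~, represented by their data. *)
Definition Bcar (C : CI) (A : alg C) : Type := { s : Sig A | exists x : Expr A, sigE x = s }.
Arguments Bcar {C} A.

Definition mkB (C : CI) (A : alg C) (x : Expr A) : Bcar A :=
  exist _ (sigE x) (ex_intro _ x eq_refl).
Arguments mkB {C A} x.

Definition rep (C : CI) (A : alg C) (s : Bcar A) : Expr A :=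
  proj1_sig (constructive_indefinite_description _ (proj2_sig s)).
Arguments rep {C A} s.

Definition BA (C : CI) (A : alg C) : alg C :=
  @Alg C (Bcar A)
    (mkB ezero)
    (fun s => mkB (eneg (rep s)))
    (fun s t => mkB (eadd (rep s) (rep t)))
    (fun w s => mkB (eun w (rep s)))
    (fun o s t => mkB (ebin o (rep s) (rep t))).
Arguments BA {C} A.

Definition canon (C : CI) (A : alg C) : action (BA A) A :=
  @Action C (BA A) A (fun s a => fst (proj1_sig s) nil a)
                     (fun o s a => snd (proj1_sig s) o a).
Arguments canon {C} A.

Definition dSig (C : CI) (A : alg C) (a : A) : Sig A :=
  (fun l a' => aadd (aadd (omegas l a) a') (aneg (omegas l a)),
   fun o a' => abin o a a').
Arguments dSig {C A} a.

(* Main.v *)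
Require Import Defs.
From Stdlib Require Import List ClassicalEpsilon FunctionalExtensionality ProofIrrelevance.
Import ListNotations.
Set Implicit Arguments.

Definition v3 {X : Type} (a b c : X) : nat -> X :=
  fun n => match n with 0 => a | 1 => b | _ => c end.

Lemma eq_ax (C : CI) (X : alg C) (H : inC X) e : EG_ident e -> holds X e.
Proof. intros E. apply H. apply ci_EG. exact E. Qed.

Lemma m_assoc (C : CI) (X : alg C) (H : inC X) (x y z : X) :
  aadd (aadd x y) z = aadd x (aadd y z).
Proof. exact (eq_ax H (eg_assoc _) (v3 x y z)). Qed.
Lemma m_0l (C : CI) (X : alg C) (H : inC X) (x : X) : aadd azero x = x.
Proof. exact (eq_ax H (eg_zl _) (v3 x x x)). Qed.
Lemma m_0r (C : CI) (X : alg C) (H : inC X) (x : X) : aadd x azero = x.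
Proof. exact (eq_ax H (eg_zr _) (v3 x x x)). Qed.
Lemma m_Nl (C : CI) (X : alg C) (H : inC X) (x : X) : aadd (aneg x) x = azero.
Proof. exact (eq_ax H (eg_nl _) (v3 x x x)). Qed.
Lemma m_Nr (C : CI) (X : alg C) (H : inC X) (x : X) : aadd x (aneg x) = azero.
Proof. exact (eq_ax H (eg_nr _) (v3 x x x)). Qed.
Lemma m_distr (C : CI) (X : alg C) (H : inC X) o (x y z : X) :
  abin o x (aadd y z) = aadd (abin o x y) (abin o x z).
Proof. exact (eq_ax H (eg_distr _ o) (v3 x y z)). Qed.
Lemma m_unadd (C : CI) (X : alg C) (H : inC X) w (x y : X) :
  aun w (aadd x y) = aadd (aun w x) (aun w y).
Proof. exact (eq_ax H (eg_unadd _ w) (v3 x y y)). Qed.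
Lemma m_unbin (C : CI) (X : alg C) (H : inC X) w o (x y : X) :
  abin o (aun w x) y = aun w (abin o x y).
Proof. exact (eq_ax H (eg_unbin _ w o) (v3 x y y)). Qed.
Lemma m_flip (C : CI) (X : alg C) (H : inC X) o (x y : X) :
  abin (flip C o) x y = abin o y x.
Proof. exact (H _ (ci_flip C o) (v3 x y y)). Qed.
Lemma m_ax1 (C : CI) (X : alg C) (H : inC X) o (x y z : X) :
  aadd x (abin o y z) = aadd (abin o y z) x.
Proof. exact (ci_ax1 C H o (v3 x y z)). Qed.
Lemma m_ax2 (C : CI) (X : alg C) (H : inC X) o ob (x y z : X) :
  abin ob (abin o x y) z = teval X (v3 x y z) (wterm_term (ci_W C o ob)).
Proof. exact (ci_ax2 C H o ob (v3 x y z)). Qed.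

Lemma m_cancel_l (C : CI) (X : alg C) (H : inC X) (x y z : X) :
  aadd x y = aadd x z -> y = z.
Proof.
  intro E. rewrite <- (m_0l H y), <- (m_0l H z), <- (m_Nl H x), !(m_assoc H), E. reflexivity.
Qed.
Lemma m_cancel_r (C : CI) (X : alg C) (H : inC X) (x y z : X) :
  aadd y x = aadd z x -> y = z.
Proof.
  intro E. rewrite <- (m_0r H y), <- (m_0r H z), <- (m_Nr H x), <- !(m_assoc H), E. reflexivity.
Qed.
Lemma m_negU (C : CI) (X : alg C) (H : inC X) (x y : X) :
  aadd x y = azero -> x = aneg y.
Proof. intro E. apply (m_cancel_r H y). rewrite E, m_Nl; auto. Qed.
Lemma m_neg0 (C : CI) (X : alg C) (H : inC X) : aneg (azero : X) = azero.
Proof. symmetry. apply m_negU; auto. apply m_0l; auto. Qed.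
Lemma m_negK (C : CI) (X : alg C) (H : inC X) (x : X) : aneg (aneg x) = x.
Proof. symmetry. apply m_negU; auto. apply m_Nr; auto. Qed.
Lemma m_negD (C : CI) (X : alg C) (H : inC X) (x y : X) :
  aneg (aadd x y) = aadd (aneg y) (aneg x).
Proof. symmetry. apply m_negU; auto.
  rewrite m_assoc, <- (m_assoc H (aneg x)), m_Nl, m_0l, m_Nl; auto. Qed.
Lemma m_idem0 (C : CI) (X : alg C) (H : inC X) (x : X) : aadd x x = x -> x = azero.
Proof. intro E. apply (m_cancel_l H x). rewrite E, m_0r; auto. Qed.
Lemma m_un0 (C : CI) (X : alg C) (H : inC X) w : aun w (azero : X) = azero.
Proof. apply m_idem0; auto. rewrite <- m_unadd, m_0l; auto. Qed.
Lemma m_unN (C : CI) (X : alg C) (H : inC X) w (x : X) : aun w (aneg x) = aneg (aun w x).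
Proof. apply m_negU; auto. rewrite <- m_unadd, m_Nl, m_un0; auto. Qed.
Lemma m_bin0r (C : CI) (X : alg C) (H : inC X) o (x : X) : abin o x azero = azero.
Proof. apply m_idem0; auto. rewrite <- m_distr, m_0l; auto. Qed.
Lemma m_bin0l (C : CI) (X : alg C) (H : inC X) o (x : X) : abin o azero x = azero.
Proof. rewrite <- m_flip, m_bin0r; auto. Qed.
Lemma m_distl (C : CI) (X : alg C) (H : inC X) o (x y z : X) :
  abin o (aadd x y) z = aadd (abin o x z) (abin o y z).
Proof. rewrite <- (m_flip H o z (aadd x y)), m_distr, !(m_flip H); auto. Qed.
Lemma m_binNr (C : CI) (X : alg C) (H : inC X) o (x y : X) :
  abin o x (aneg y) = aneg (abin o x y).
Proof. apply m_negU; auto. rewrite <- m_distr, m_Nl, m_bin0r; auto. Qed.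
Lemma m_binNl (C : CI) (X : alg C) (H : inC X) o (x y : X) :
  abin o (aneg x) y = aneg (abin o x y).
Proof. apply m_negU; auto. rewrite <- m_distl, m_Nl, m_bin0l; auto. Qed.
Lemma m_conj_central (C : CI) (X : alg C) (H : inC X) o (y z x : X) :
  aadd (aadd (abin o y z) x) (aneg (abin o y z)) = x.
Proof. rewrite <- (m_ax1 H), (m_assoc H), m_Nr, m_0r; auto. Qed.
Lemma m_addNK (C : CI) (X : alg C) (H : inC X) (x y : X) : aadd x (aadd (aneg x) y) = y.
Proof. rewrite <- m_assoc, m_Nr, m_0l; auto. Qed.
Lemma m_addKN (C : CI) (X : alg C) (H : inC X) (x y : X) : aadd (aneg x) (aadd x y) = y.
Proof. rewrite <- m_assoc, m_Nl, m_0l; auto. Qed.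

Lemma om_app (S : signature) (X : alg S) l l' (x : X) : omegas (l ++ l') x = omegas l (omegas l' x).
Proof. unfold omegas. apply fold_right_app. Qed.
Lemma om_0 (C : CI) (X : alg C) (H : inC X) l : omegas l (azero : X) = azero.
Proof. induction l; simpl; auto. rewrite IHl, m_un0; auto. Qed.
Lemma om_add (C : CI) (X : alg C) (H : inC X) l (x y : X) :
  omegas l (aadd x y) = aadd (omegas l x) (omegas l y).
Proof. induction l; simpl; auto. rewrite IHl, m_unadd; auto. Qed.
Lemma om_neg (C : CI) (X : alg C) (H : inC X) l (x : X) :
  omegas l (aneg x) = aneg (omegas l x).
Proof. induction l; simpl; auto. rewrite IHl, m_unN; auto. Qed.
Lemma om_bin (C : CI) (X : alg C) (H : inC X) l o (x y : X) :
  omegas l (abin o x y) = abin o (omegas l x) y.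
Proof. induction l; simpl; auto. rewrite IHl, m_unbin; auto. Qed.
Lemma om_morph (S : signature) (X Y : alg S) (f : X -> Y) l x :
  morph f -> f (omegas l x) = omegas l (f x).
Proof. intros (_&_&_&Hu&_). induction l; simpl; auto. rewrite Hu, IHl; auto. Qed.

Lemma teval_morph (S : signature) (X Y : alg S) (f : X -> Y) v t :
  morph f -> f (teval X v t) = teval Y (fun n => f (v n)) t.
Proof.
  intros Hf. destruct Hf as (H0&HN&HD&HU&HB).
  induction t; simpl; try congruence.
Qed.

Lemma models_surj (C : CI) (X Y : alg C) (f : X -> Y) :
  morph f -> (forall y, exists x, f x = y) -> inC X -> inC Y.
Proof.
  intros Hf Hs HX e He v.
  destruct (choice (fun n x => f x = v n) (fun n => Hs (v n))) as [g Hg].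
  assert (Hv : v = fun n => f (g n)) by (apply functional_extensionality; intro; auto).
  subst v. rewrite <- !teval_morph; auto. f_equal. apply HX; auto.
Qed.

Lemma models_inj (C : CI) (X Y : alg C) (f : X -> Y) :
  morph f -> (forall x x', f x = f x' -> x = x') -> inC Y -> inC X.
Proof.
  intros Hf Hi HY e He v. apply Hi. rewrite !teval_morph; auto. apply HY; auto.
Qed.

Lemma sigE_rep (C : CI) (A : alg C) (s : BA A) : sigE (rep s) = proj1_sig s.
Proof. unfold rep. destruct (constructive_indefinite_description _ _) as [x Hx]. simpl. exact Hx. Qed.

Lemma Beq (C : CI) (A : alg C) (s t : BA A) : proj1_sig s = proj1_sig t -> s = t.
Proof. destruct s as [s Hs], t as [t Ht]. simpl. intro E. subst. f_equal. apply proof_irrelevance. Qed.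

Lemma D_add (C : CI) (A : alg C) (s t : BA A) :
  proj1_sig (aadd s t) = addSig (proj1_sig s) (proj1_sig t).
Proof. change (addSig (sigE (rep s)) (sigE (rep t)) = addSig (proj1_sig s) (proj1_sig t)). rewrite !sigE_rep. reflexivity. Qed.
Lemma D_bin (C : CI) (A : alg C) o (s t : BA A) :
  proj1_sig (abin o s t) = binSig o (proj1_sig s) (proj1_sig t).
Proof. change (binSig o (sigE (rep s)) (sigE (rep t)) = binSig o (proj1_sig s) (proj1_sig t)). rewrite !sigE_rep. reflexivity. Qed.
Lemma D_zero (C : CI) (A : alg C) : proj1_sig (azero : BA A) = zeroSig A.
Proof. reflexivity. Qed.

Lemma shift (C : CI) (A : alg C) (x : Expr A) :
  (forall l l' a, fst (sigU l x) l' a = fst (sigU (l' ++ l) x) nil a) /\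
  (forall l l' a, fst (negU l x) l' a = fst (negU (l' ++ l) x) nil a).
Proof.
  induction x as [B act HB Hd b| |x1 IH1 x2 IH2|x IH|w x IH|o x1 IH1 x2 IH2];
    split; intros l l' a; simpl; auto.
  - rewrite om_app. reflexivity.
  - rewrite om_app. reflexivity.
  - rewrite (proj1 IH2 l l'), (proj1 IH1 l l'). reflexivity.
  - rewrite (proj2 IH1 l l'), (proj2 IH2 l l'). reflexivity.
  - apply (proj2 IH).
  - apply (proj1 IH).
  - rewrite (proj1 IH). rewrite app_assoc. reflexivity.
  - rewrite (proj2 IH). rewrite app_assoc. reflexivity.
Qed.

Lemma D_un_fst (C : CI) (A : alg C) w (s : BA A) l a :
  fst (proj1_sig (aun w s)) l a = fst (proj1_sig s) (l ++ [w]) a.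
Proof.
  change (fst (sigU [w] (rep s)) l a = fst (proj1_sig s) (l ++ [w]) a).
  rewrite <- sigE_rep. unfold sigE.
  rewrite (proj1 (shift (rep s)) [w] l a), (proj1 (shift (rep s)) nil (l ++ [w]) a), app_nil_r.
  reflexivity.
Qed.

Lemma D_om_fst (C : CI) (A : alg C) l (s : BA A) m a :
  fst (proj1_sig (omegas l s)) m a = fst (proj1_sig s) (m ++ l) a.
Proof.
  revert m. induction l as [|w l IH]; intro m.
  - rewrite app_nil_r. reflexivity.
  - change (omegas (w :: l) s) with (aun w (omegas l s)).
    rewrite D_un_fst, IH, <- app_assoc. reflexivity.
Qed.

Lemma weval_j (C : CI) (A Y : alg C) (HY : inC Y) (j : A -> Y) (Hj : morph j) (u v : Y)
  (SX SY : op2 C -> A -> A)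
  (HX : forall p y, j (SX p y) = abin p u (j y))
  (HYY : forall p y, j (SY p y) = abin p v (j y)) W x :
  j (weval A W SX SY x) = teval Y (v3 u v (j x)) (wterm_term W).
Proof.
  destruct Hj as (H0&HN&HD&HU&HB).
  induction W as [sh p q| |W IH|W1 IH1 W2 IH2|w W IH]; simpl.
  - destruct sh; simpl; rewrite ?HX, ?HYY, ?HX, ?(m_flip HY); reflexivity.
  - exact H0.
  - rewrite HN, IH. reflexivity.
  - rewrite HD, IH1, IH2. reflexivity.
  - rewrite HU, IH. reflexivity.
Qed.

Ltac dd Hd := destruct Hd as (E&HE&p&i&s&Hp&Hi&Hs&Hinj&Hker&Hps&Hdot&Hop);
  destruct Hi as (Hi0&HiN&HiD&HiU&HiB); destruct Hs as (Hs0&HsN&HsD&HsU&HsB).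

Lemma DA1 (C : CI) (B A : alg C) (act : action B A) (Hd : derived act) a :
  act_dot act azero a = a.
Proof. dd Hd. apply Hinj. rewrite Hdot, Hs0, (m_neg0 HE), (m_0l HE), (m_0r HE). reflexivity. Qed.

Lemma DA2 (C : CI) (B A : alg C) (act : action B A) (Hd : derived act) b b' a :
  act_dot act (aadd b b') a = act_dot act b (act_dot act b' a).
Proof. dd Hd. apply Hinj. rewrite !Hdot, HsD, (m_negD HE), !(m_assoc HE). reflexivity. Qed.

Lemma DA5 (C : CI) (B A : alg C) (act : action B A) (Hd : derived act) o a :
  act_op act o azero a = azero.
Proof. dd Hd. apply Hinj. rewrite Hop, Hs0, (m_bin0l HE), Hi0. reflexivity. Qed.

Lemma DA6 (C : CI) (B A : alg C) (act : action B A) (Hd : derived act) o b b' a :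
  act_op act o (aadd b b') a = aadd (act_op act o b a) (act_op act o b' a).
Proof. dd Hd. apply Hinj. rewrite Hop, HiD, !Hop, HsD, (m_distl HE). reflexivity. Qed.

Lemma DA7 (C : CI) (B A : alg C) (act : action B A) (Hd : derived act) o b a :
  act_op act o (aneg b) a = aneg (act_op act o b a).
Proof. dd Hd. apply Hinj. rewrite Hop, HiN, Hop, HsN, (m_binNl HE). reflexivity. Qed.

Lemma DA8 (C : CI) (B A : alg C) (act : action B A) (Hd : derived act) o w b a :
  act_op act o (aun w b) a = aun w (act_op act o b a).
Proof. dd Hd. apply Hinj. rewrite Hop, HiU, Hop, HsU, (m_unbin HE). reflexivity. Qed.

Lemma DA9 (C : CI) (B A : alg C) (act : action B A) (Hd : derived act) l o b b' a :
  act_dot act (omegas l (abin o b b')) a = a.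
Proof.
  dd Hd. apply Hinj. rewrite Hdot.
  assert (Hsm : morph s) by (repeat split; auto).
  rewrite (om_morph _ _ Hsm), HsB, (om_bin HE), (m_conj_central HE). reflexivity.
Qed.

Lemma DA10 (C : CI) (B A : alg C) (act : action B A) (Hd : derived act) o ob b b' a :
  act_op act ob (abin o b b') a =
  weval A (ci_W C o ob) (fun p => act_op act p b) (fun p => act_op act p b') a.
Proof.
  dd Hd. apply Hinj. rewrite Hop, HsB, (m_ax2 HE).
  assert (Him : morph i) by (repeat split; auto).
  rewrite (weval_j HE Him (s b) (s b')); auto.
Qed.

Lemma DA4a (C : CI) (B A : alg C) (HB : inC B) (act : action B A) (Hd : derived act) b a :
  act_dot act (aneg b) (act_dot act b a) = a.
Proof. rewrite <- (DA2 Hd), (m_Nl HB), (DA1 Hd). reflexivity. Qed.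
Lemma DA4b (C : CI) (B A : alg C) (HB : inC B) (act : action B A) (Hd : derived act) b a :
  act_dot act b (act_dot act (aneg b) a) = a.
Proof. rewrite <- (DA2 Hd), (m_Nr HB), (DA1 Hd). reflexivity. Qed.

Ltac pext := apply injective_projections; simpl;
  apply functional_extensionality; intro; apply functional_extensionality; intro.

Lemma G0 (C : CI) (B A : alg C) (HB : inC B) (act : action B A) (Hd : derived act) :
  genSig act azero = zeroSig A.
Proof. pext. rewrite (om_0 HB), (DA1 Hd). reflexivity. rewrite (DA5 Hd). reflexivity. Qed.

Lemma Gadd (C : CI) (B A : alg C) (HB : inC B) (act : action B A) (Hd : derived act) u v :
  genSig act (aadd u v) = addSig (genSig act u) (genSig act v).
Proof. pext. rewrite (om_add HB), (DA2 Hd). reflexivity. rewrite (DA6 Hd). reflexivity. Qed.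

Lemma Gbin (C : CI) (B A : alg C) (HB : inC B) (act : action B A) (Hd : derived act) o u v :
  genSig act (abin o u v) = binSig o (genSig act u) (genSig act v).
Proof. pext. rewrite (DA9 Hd). reflexivity. rewrite (DA10 Hd). reflexivity. Qed.

Lemma Gnegbin (C : CI) (B A : alg C) (HB : inC B) (act : action B A) (Hd : derived act) o u v :
  genSig act (aneg (abin o u v)) =
  (fun _ a => a, fun ob a => aneg (snd (binSig o (genSig act u) (genSig act v)) ob a)).
Proof. pext. rewrite <- (m_binNl HB), (DA9 Hd). reflexivity. rewrite (DA7 Hd), (DA10 Hd). reflexivity. Qed.

Lemma Gun (C : CI) (B A : alg C) (HB : inC B) (act : action B A) (Hd : derived act) w u u' :
  genSig act u = genSig act u' -> genSig act (aun w u) = genSig act (aun w u').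
Proof.
  intro E. assert (E1 := f_equal fst E). assert (E2 := f_equal snd E). simpl in E1, E2.
  pext.
  - change (act_dot act (omegas x (omegas [w] u)) x0 = act_dot act (omegas x (omegas [w] u')) x0).
    rewrite <- !om_app. exact (equal_f (equal_f E1 _) _).
  - rewrite !(DA8 Hd). f_equal. exact (equal_f (equal_f E2 _) _).
Qed.

Lemma Gneg (C : CI) (B A : alg C) (HB : inC B) (act : action B A) (Hd : derived act) u u' :
  genSig act u = genSig act u' -> genSig act (aneg u) = genSig act (aneg u').
Proof.
  intro E. assert (E1 := f_equal fst E). assert (E2 := f_equal snd E). simpl in E1, E2.
  pext.
  - rewrite !(om_neg HB).
    assert (Hx : forall a, act_dot act (omegas x u) a = act_dot act (omegas x u') a)
      by (intro a; exact (equal_f (equal_f E1 _) _)).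
    rewrite <- (DA4b HB Hd (omegas x u') x0) at 1. rewrite <- Hx, (DA4a HB Hd). reflexivity.
  - rewrite !(DA7 Hd). f_equal. exact (equal_f (equal_f E2 _) _).
Qed.

Definition dotB (C : CI) (A : alg C) (s : BA A) (a : A) : A := fst (proj1_sig s) nil a.
Definition opB (C : CI) (A : alg C) o (s : BA A) (a : A) : A := snd (proj1_sig s) o a.

Lemma dotB0 (C : CI) (A : alg C) (a : A) : dotB (azero : BA A) a = a.
Proof. reflexivity. Qed.
Lemma opB0 (C : CI) (A : alg C) o (a : A) : opB o (azero : BA A) a = azero.
Proof. reflexivity. Qed.


Lemma S_zero (C : CI) (A : alg C) : (azero : semidirect (canon A)) = (azero, azero).
Proof. reflexivity. Qed.
Lemma S_neg (C : CI) (A : alg C) (b : BA A) (a : A) :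
  aneg ((b, a) : semidirect (canon A)) = (aneg b, aneg (dotB (aneg b) a)).
Proof. reflexivity. Qed.
Lemma S_add (C : CI) (A : alg C) (b b' : BA A) (a a' : A) :
  aadd ((b, a) : semidirect (canon A)) (b', a') = (aadd b b', aadd a (dotB b a')).
Proof. reflexivity. Qed.
Lemma S_un (C : CI) (A : alg C) w (b : BA A) (a : A) :
  aun w ((b, a) : semidirect (canon A)) = (aun w b, aun w a).
Proof. reflexivity. Qed.
Lemma S_bin (C : CI) (A : alg C) o (b b' : BA A) (a a' : A) :
  abin o ((b, a) : semidirect (canon A)) (b', a') =
  (abin o b b', aadd (aadd (abin o a a') (opB (flip C o) b' a)) (opB o b a')).
Proof. reflexivity. Qed.

Ltac Ssimpl E := repeat progress (rewrite ?S_zero, ?S_neg, ?S_add, ?S_un, ?S_bin in E).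

Lemma HBA_of (C : CI) (A : alg C) (HS : inC (semidirect (canon A))) : inC (BA A).
Proof.
  apply (@models_surj C (semidirect (canon A)) (BA A) fst); auto.
  - repeat split.
  - intro y. exists (y, azero). reflexivity.
Qed.

Lemma F_dot0 (C : CI) (A : alg C) (HA : inC A) (HS : inC (semidirect (canon A))) (s : BA A) :
  dotB s azero = azero.
Proof.
  pose proof (m_0r HS (s, azero)) as E. Ssimpl E. apply (f_equal snd) in E. cbn [fst snd] in E.
  rewrite (m_0l HA) in E. exact E.
Qed.

Lemma F_dotD (C : CI) (A : alg C) (HA : inC A) (HS : inC (semidirect (canon A))) (s : BA A) (a a' : A) :
  dotB s (aadd a a') = aadd (dotB s a) (dotB s a').
Proof.
  pose proof (HBA_of HS) as HBA.
  pose proof (m_assoc HS (s, azero) (azero, a) (azero, a')) as E. Ssimpl E.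
  rewrite ?dotB0, ?(m_0r HBA), ?(m_0l HA) in E. apply (f_equal snd) in E. cbn [fst snd] in E.
  symmetry. exact E.
Qed.

Lemma F_op0 (C : CI) (A : alg C) (HA : inC A) (HS : inC (semidirect (canon A))) o (s : BA A) :
  opB o s azero = azero.
Proof.
  pose proof (m_bin0r HS o (s, azero)) as E. Ssimpl E.
  rewrite ?opB0, (m_bin0r HA), ?(m_0l HA) in E. apply (f_equal snd) in E. cbn [fst snd] in E. exact E.
Qed.

Lemma F_opU (C : CI) (A : alg C) (HA : inC A) (HS : inC (semidirect (canon A))) o w (s : BA A) (a : A) :
  opB o (aun w s) a = aun w (opB o s a).
Proof.
  pose proof (m_unbin HS w o (s, azero) (azero, a)) as E. Ssimpl E.
  rewrite ?opB0, ?(m_un0 HA), ?(m_bin0l HA), ?(m_0l HA), ?(m_0r HA) in E.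
  apply (f_equal snd) in E. cbn [fst snd] in E. exact E.
Qed.

Lemma F_dotU (C : CI) (A : alg C) (HA : inC A) (HS : inC (semidirect (canon A))) w (s : BA A) (a : A) :
  dotB (aun w s) (aun w a) = aun w (dotB s a).
Proof.
  pose proof (m_unadd HS w (s, azero) (azero, a)) as E. Ssimpl E.
  rewrite ?(m_un0 HA), ?(m_0l HA) in E.
  apply (f_equal snd) in E. cbn [fst snd] in E. symmetry. exact E.
Qed.

Lemma F_central (C : CI) (A : alg C) (HA : inC A) (HS : inC (semidirect (canon A))) o (s : BA A) (a y : A) :
  aadd y (opB o s a) = aadd (opB o s a) y.
Proof.
  pose proof (HBA_of HS) as HBA.
  pose proof (m_ax1 HS o (azero, y) (s, azero) (azero, a)) as E. Ssimpl E.
  rewrite (m_bin0r HBA), ?dotB0, ?opB0, (m_bin0l HA), ?(m_0l HA) in E.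
  apply (f_equal snd) in E. cbn [fst snd] in E. exact E.
Qed.

Lemma F_dotbin (C : CI) (A : alg C) (HA : inC A) (HS : inC (semidirect (canon A))) o (r : BA A) (c x : A) :
  abin o (dotB r c) x = abin o c x.
Proof.
  pose proof (HBA_of HS) as HBA.
  pose proof (m_distl HS o (r, azero) (azero, c) (azero, x)) as E. Ssimpl E.
  rewrite ?(m_0r HBA), ?(m_bin0r HBA), ?dotB0, ?opB0, ?(m_bin0l HA), ?(m_0l HA), ?(m_0r HA) in E.
  apply (f_equal snd) in E. cbn [fst snd] in E.
  rewrite (m_ax1 HA o (opB o r x) c x) in E.
  exact (m_cancel_r HA _ _ _ E).
Qed.

Definition jS {C : CI} {A : alg C} (a : A) : semidirect (canon A) := (azero, a).

Lemma jS_morph (C : CI) (A : alg C) (HA : inC A) (HS : inC (semidirect (canon A))) :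
  morph (@jS C A).
Proof.
  pose proof (HBA_of HS) as HBA. unfold jS.
  repeat split; intros; rewrite ?S_neg, ?S_add, ?S_un, ?S_bin.
  - rewrite (m_neg0 HBA). reflexivity.
  - rewrite (m_0l HBA). reflexivity.
  - rewrite (m_un0 HBA). reflexivity.
  - rewrite (m_bin0l HBA), ?opB0, ?(m_0r HA). reflexivity.
Qed.

Lemma S_rj (C : CI) (A : alg C) (HA : inC A) (HS : inC (semidirect (canon A))) o (r : BA A) (y : A) :
  abin o ((r, azero) : semidirect (canon A)) (jS y) = jS (opB o r y).
Proof.
  pose proof (HBA_of HS) as HBA. unfold jS. rewrite S_bin.
  rewrite (m_bin0r HBA), (m_bin0l HA), opB0, ?(m_0l HA). reflexivity.
Qed.

Lemma S_jr (C : CI) (A : alg C) (HA : inC A) (HS : inC (semidirect (canon A))) o (r : BA A) (y : A) :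
  abin o (jS y) ((r, azero) : semidirect (canon A)) = jS (opB (flip C o) r y).
Proof.
  pose proof (HBA_of HS) as HBA. unfold jS. rewrite S_bin.
  rewrite (m_bin0l HBA), (m_bin0r HA), opB0, (m_0l HA), (m_0r HA). reflexivity.
Qed.

Lemma S_jj (C : CI) (A : alg C) (HA : inC A) (HS : inC (semidirect (canon A))) o (y z : A) :
  abin o (jS y) (jS z) = jS (abin o y z).
Proof. symmetry. apply (jS_morph HA HS). Qed.

Lemma Dneg_snd (C : CI) (A : alg C) (HA : inC A) (HS : inC (semidirect (canon A))) o (r : BA A) (x : A) :
  opB o (aneg r) x = aneg (opB o r x).
Proof.
  pose proof (HBA_of HS) as HBA.
  pose proof (f_equal (@proj1_sig _ _) (m_Nl HBA r)) as E. rewrite D_add in E.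
  apply (f_equal snd) in E. cbn [fst snd] in E.
  apply m_negU; auto. exact (equal_f (equal_f E o) x).
Qed.

Lemma Dneg_fst1 (C : CI) (A : alg C) (HS : inC (semidirect (canon A))) (r : BA A) l (x : A) :
  fst (proj1_sig (aneg r)) l (fst (proj1_sig r) l x) = x.
Proof.
  pose proof (HBA_of HS) as HBA.
  pose proof (f_equal (@proj1_sig _ _) (m_Nl HBA r)) as E. rewrite D_add in E.
  apply (f_equal fst) in E. cbn [fst snd] in E. exact (equal_f (equal_f E l) x).
Qed.
Lemma Dneg_fst2 (C : CI) (A : alg C) (HS : inC (semidirect (canon A))) (r : BA A) l (x : A) :
  fst (proj1_sig r) l (fst (proj1_sig (aneg r)) l x) = x.
Proof.
  pose proof (HBA_of HS) as HBA.
  pose proof (f_equal (@proj1_sig _ _) (m_Nr HBA r)) as E. rewrite D_add in E.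
  apply (f_equal fst) in E. cbn [fst snd] in E. exact (equal_f (equal_f E l) x).
Qed.

Lemma F_dotUl (C : CI) (A : alg C) (HA : inC A) (HS : inC (semidirect (canon A))) l (r : BA A) (c : A) :
  omegas l (dotB r c) = dotB (omegas l r) (omegas l c).
Proof. induction l as [|w l IH]; [reflexivity|].
  change (aun w (omegas l (dotB r c)) = dotB (aun w (omegas l r)) (aun w (omegas l c))).
  rewrite IH, (F_dotU HA HS). reflexivity. Qed.

Lemma F_opUl (C : CI) (A : alg C) (HA : inC A) (HS : inC (semidirect (canon A))) l o (r : BA A) (c : A) :
  omegas l (opB o r c) = opB o (omegas l r) c.
Proof. induction l as [|w l IH]; [reflexivity|].
  change (aun w (omegas l (opB o r c)) = opB o (aun w (omegas l r)) c).
  rewrite IH, (F_opU HA HS). reflexivity. Qed.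

Lemma fst_dotB (C : CI) (A : alg C) l (r : BA A) x :
  fst (proj1_sig r) l x = dotB (omegas l r) x.
Proof. unfold dotB. rewrite D_om_fst. reflexivity. Qed.

Definition conjA {C : CI} (A : alg C) : action A A :=
  @Action C A A (fun b a => aadd (aadd b a) (aneg b)) (fun o b a => abin o b a).

Definition prodA {S : signature} (X Y : alg S) : alg S :=
  @Alg S (X * Y)%type (azero, azero)
    (fun p => (aneg (fst p), aneg (snd p)))
    (fun p q => (aadd (fst p) (fst q), aadd (snd p) (snd q)))
    (fun w p => (aun w (fst p), aun w (snd p)))
    (fun o p q => (abin o (fst p) (fst q), abin o (snd p) (snd q))).

Lemma teval_prod (S : signature) (X Y : alg S) v t :
  teval (prodA X Y) v t = (teval X (fun n => fst (v n)) t, teval Y (fun n => snd (v n)) t).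
Proof. induction t; simpl; rewrite ?IHt, ?IHt1, ?IHt2; auto; destruct (v n); auto. Qed.

Lemma prod_inC (C : CI) (X Y : alg C) : inC X -> inC Y -> inC (prodA X Y).
Proof. intros HX HY e He v. rewrite !teval_prod. f_equal; [apply HX | apply HY]; auto. Qed.

Lemma Hder_conj (C : CI) (A : alg C) (HA : inC A) : derived (conjA A).
Proof.
  exists (prodA A A). split; [apply prod_inC; auto|].
  exists snd, (fun a => (a, azero)), (fun b => (b, b)).
  repeat split; intros; simpl;
    rewrite ?(m_neg0 HA), ?(m_0l HA), ?(m_un0 HA), ?(m_bin0l HA), ?(m_0r HA), ?(m_Nr HA), ?(m_bin0r HA);
    auto.
  - congruence.
  - destruct e as [e1 e2]; simpl in *; subst. exists e1. reflexivity.
  - destruct H as [a' E]. subst. reflexivity.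
Qed.

Definition dmap {C : CI} {A : alg C} (HA : inC A) (a : A) : BA A :=
  mkB (egen (conjA A) HA (Hder_conj HA) a).

Lemma D_dmap (C : CI) (A : alg C) (HA : inC A) a : proj1_sig (dmap HA a) = dSig a.
Proof. reflexivity. Qed.

Ltac pext2 := apply injective_projections;
  unfold addSig, dSig, binSig, zeroSig, genSig; cbn [fst snd];
  apply functional_extensionality; intro; apply functional_extensionality; intro.

Lemma id_morph (S : signature) (X : alg S) : morph (fun x : X => x).
Proof. repeat split. Qed.

Lemma F_dotN (C : CI) (A : alg C) (HA : inC A) (HS : inC (semidirect (canon A))) (s : BA A) (a : A) :
  dotB s (aneg a) = aneg (dotB s a).
Proof. apply m_negU; auto. rewrite <- (F_dotD HA HS), (m_Nl HA), (F_dot0 HA HS). reflexivity. Qed.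

Lemma jS_inj (C : CI) (A : alg C) (a b : A) : jS a = jS b -> a = b.
Proof. unfold jS. intro E. injection E. auto. Qed.

Lemma part2 (C : CI) (A : alg C) (HA : inC A) (HS : inC (semidirect (canon A))) :
  is_actor (dmap HA) (canon A).
Proof.
  pose proof (HBA_of HS) as HBA.
  assert (d0 : dmap HA azero = azero).
  { apply Beq. change (dSig azero = zeroSig A). pext2.
    - rewrite (om_0 HA), (m_neg0 HA), (m_0l HA), (m_0r HA). reflexivity.
    - apply (m_bin0l HA). }
  assert (dadd : forall a a', dmap HA (aadd a a') = aadd (dmap HA a) (dmap HA a')).
  { intros a a'. apply Beq. rewrite D_add.
    change (dSig (aadd a a') = addSig (dSig a) (dSig a')). pext2.
    - rewrite (om_add HA), (m_negD HA), !(m_assoc HA). reflexivity.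
    - apply (m_distl HA). }
  assert (dneg : forall a, dmap HA (aneg a) = aneg (dmap HA a)).
  { intro a. apply m_negU; auto. rewrite <- dadd, (m_Nl HA), d0. reflexivity. }
  assert (dun : forall w a, dmap HA (aun w a) = aun w (dmap HA a)).
  { intros w a. apply Beq. apply injective_projections;
      apply functional_extensionality; intro l; apply functional_extensionality; intro x.
    - rewrite D_un_fst. change (fst (dSig (aun w a)) l x = fst (dSig a) (l ++ [w]) x).
      unfold dSig; cbn [fst]. rewrite om_app. reflexivity.
    - change (abin l (aun w a) x = opB l (aun w (dmap HA a)) x).
      rewrite (F_opU HA HS), (m_unbin HA). reflexivity. }
  assert (dbin : forall o a a', dmap HA (abin o a a') = abin o (dmap HA a) (dmap HA a')).
  { intros o a a'. apply Beq. rewrite D_bin.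
    change (dSig (abin o a a') = binSig o (dSig a) (dSig a')). pext2.
    - rewrite (om_bin HA), (m_conj_central HA). reflexivity.
    - rewrite (m_ax2 HA). symmetry.
      exact (weval_j HA (id_morph A) a a' _ _ (fun _ _ => eq_refl) (fun _ _ => eq_refl) _ _). }
  assert (Hdm : morph (dmap HA)) by (repeat split; auto).
  split.
  -
    split; [exact HA|]. split; [exact HBA|]. split; [exact Hdm|]. split.
    +
      exists (semidirect (canon A)). split; [exact HS|].
      exists fst, (@jS C A), (fun b => (b, azero)).
      split; [repeat split|].
      split; [exact (jS_morph HA HS)|].
      split.
      { repeat split; intros; rewrite ?S_neg, ?S_add, ?S_un, ?S_bin;
          rewrite ?(F_dot0 HA HS), ?(F_op0 HA HS), ?(m_neg0 HA), ?(m_0l HA), ?(m_un0 HA),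
            ?(m_bin0l HA), ?(m_0l HA); reflexivity. }
      split; [exact (@jS_inj C A)|].
      split.
      { intros [b a]. simpl. split.
        - intro E. subst. exists a. reflexivity.
        - intros [a' E]. unfold jS in E. injection E. auto. }
      split; [reflexivity|].
      split.
      { intros b a. unfold jS. rewrite !S_add, S_neg, (F_dot0 HA HS), (m_neg0 HA), S_add.
        rewrite (m_0r HBA), (m_Nr HBA), (F_dot0 HA HS), !(m_0l HA), (m_0r HA). reflexivity. }
      { intros o b a. symmetry. apply (S_rj HA HS). }
    + split.
      {
        intros r c. apply Beq. rewrite !D_add.
        change (dSig (act_dot (canon A) r c) =
                addSig (addSig (proj1_sig r) (dSig c)) (proj1_sig (aneg r))).
        change (act_dot (canon A) r c) with (dotB r c).
        apply injective_projections; apply functional_extensionality; intro l;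
          apply functional_extensionality; intro x.
        - unfold addSig, dSig; cbn [fst].
          pose proof (Dneg_fst2 HS r l x) as N. rewrite (fst_dotB l r) in N.
          rewrite (fst_dotB l r), !(F_dotD HA HS), (F_dotN HA HS), N, (F_dotUl HA HS).
          rewrite !(m_assoc HA). reflexivity.
        - change (abin l (dotB r c) x = aadd (aadd (opB l r x) (abin l c x)) (opB l (aneg r) x)).
          rewrite (F_dotbin HA HS), (Dneg_snd HA HS), (m_ax1 HA l (opB l r x) c x).
          rewrite (m_assoc HA), (m_Nr HA), (m_0r HA). reflexivity. }
      split; [reflexivity|].
      split; [reflexivity|].
      split.
      { intros o r c. apply Beq. rewrite D_bin.
        change (dSig (opB o r c) = binSig o (proj1_sig r) (dSig c)).
        apply injective_projections; apply functional_extensionality; intro l;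
          apply functional_extensionality; intro x.
        - unfold binSig, dSig; cbn [fst]. rewrite (F_opUl HA HS).
          rewrite <- (F_central HA HS), (m_assoc HA), (m_Nr HA), (m_0r HA). reflexivity.
        - unfold binSig, dSig; cbn [snd]. apply (@jS_inj C A).
          rewrite <- (S_jj HA HS), <- (S_rj HA HS), (m_ax2 HS). symmetry.
          apply (weval_j HS (jS_morph HA HS)); intros; symmetry;
            first [apply (S_rj HA HS) | apply (S_jj HA HS) | apply (S_jr HA HS)]. }
      { intros o c r. apply Beq. rewrite D_bin.
        change (dSig (opB (flip C o) r c) = binSig o (dSig c) (proj1_sig r)).
        apply injective_projections; apply functional_extensionality; intro l;
          apply functional_extensionality; intro x.
        - unfold binSig, dSig; cbn [fst]. rewrite (F_opUl HA HS).
          rewrite <- (F_central HA HS), (m_assoc HA), (m_Nr HA), (m_0r HA). reflexivity.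
        - unfold binSig, dSig; cbn [snd]. apply (@jS_inj C A).
          rewrite <- (S_jj HA HS), <- (S_jr HA HS), (m_ax2 HS). symmetry.
          apply (weval_j HS (jS_morph HA HS)); intros; symmetry;
            first [apply (S_rj HA HS) | apply (S_jj HA HS) | apply (S_jr HA HS)]. }
  -
    intros D actD HD Hder.
    set (phi := fun c : D => mkB (egen actD HD Hder c) : BA A).
    assert (p0 : phi azero = azero).
    { apply Beq. change (genSig actD azero = zeroSig A). apply (G0 HD Hder). }
    assert (padd : forall c c', phi (aadd c c') = aadd (phi c) (phi c')).
    { intros c c'. apply Beq. rewrite D_add.
      change (genSig actD (aadd c c') = addSig (genSig actD c) (genSig actD c')).
      apply (Gadd HD Hder). }
    exists phi. split.
    + split; [|split; intros; reflexivity].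
      repeat split; auto.
      * intro c. apply m_negU; auto. rewrite <- padd, (m_Nl HD), p0. reflexivity.
      * intros w c. apply Beq. apply injective_projections;
          apply functional_extensionality; intro l; apply functional_extensionality; intro x.
        -- rewrite D_un_fst.
           change (act_dot actD (omegas l (aun w c)) x = act_dot actD (omegas (l ++ [w]) c) x).
           rewrite om_app. reflexivity.
        -- change (act_op actD l (aun w c) x = opB l (aun w (phi c)) x).
           rewrite (F_opU HA HS), (DA8 Hder). reflexivity.
      * intros o c c'. apply Beq. rewrite D_bin.
        change (genSig actD (abin o c c') = binSig o (genSig actD c) (genSig actD c')).
        apply (Gbin HD Hder).
    + intros phi' (Hm & Hc1 & Hc2). apply functional_extensionality; intro c.
      apply Beq. apply injective_projections;
        apply functional_extensionality; intro l; apply functional_extensionality; intro x.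
      * change (act_dot actD (omegas l c) x = fst (proj1_sig (phi' c)) l x).
        rewrite (fst_dotB l (phi' c)), <- (om_morph (f := phi') l c Hm).
        exact (Hc1 _ _).
      * exact (Hc2 _ _ _).
Qed.

Lemma SD_zero (S : signature) (B A : alg S) (act : action B A) :
  (azero : semidirect act) = (azero, azero).
Proof. reflexivity. Qed.
Lemma SD_neg (S : signature) (B A : alg S) (act : action B A) (b : B) (a : A) :
  aneg ((b, a) : semidirect act) = (aneg b, aneg (act_dot act (aneg b) a)).
Proof. reflexivity. Qed.
Lemma SD_add (S : signature) (B A : alg S) (act : action B A) (b b' : B) (a a' : A) :
  aadd ((b, a) : semidirect act) (b', a') = (aadd b b', aadd a (act_dot act b a')).
Proof. reflexivity. Qed.
Lemma SD_un (S : signature) (B A : alg S) (act : action B A) w (b : B) (a : A) :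
  aun w ((b, a) : semidirect act) = (aun w b, aun w a).
Proof. reflexivity. Qed.
Lemma SD_bin (S : signature) (B A : alg S) (act : action B A) o (b b' : B) (a a' : A) :
  abin o ((b, a) : semidirect act) (b', a') =
  (abin o b b', aadd (aadd (abin o a a') (act_op act (flip S o) b' a)) (act_op act o b a')).
Proof. reflexivity. Qed.

Definition Ucompat {C : CI} {A Act : alg C} (act' : action Act A) {B : alg C} (act : action B A)
  (phi : B -> Act) : Prop :=
  morph phi /\ (forall c a, act_dot act c a = act_dot act' (phi c) a) /\
  (forall o c a, act_op act o c a = act_op act' o (phi c) a).

Fixpoint ev {C : CI} {A Act : alg C}
  (U : forall (B : alg C) (act : action B A), inC B -> derived act -> B -> Act)
  (x : Expr A) : Act :=
  match x with
  | @egen _ _ B act HB Hd b => U B act HB Hd b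
  | ezero => azero
  | eadd x y => aadd (ev U x) (ev U y)
  | eneg x => aneg (ev U x)
  | eun w x => aun w (ev U x)
  | ebin o x y => abin o (ev U x) (ev U y)
  end.

Lemma genSig_phi (C : CI) (A Act B : alg C) (act' : action Act A) (act : action B A)
  (phi : B -> Act) (H : Ucompat act' act phi) z :
  genSig act' (phi z) = genSig act z.
Proof.
  destruct H as (Hm & H1 & H2). pext.
  - rewrite <- (om_morph (f := phi) x z Hm). symmetry. apply H1.
  - symmetry. apply H2.
Qed.

Lemma ev_thm (C : CI) (A Act : alg C) (HAct : inC Act) (act' : action Act A) (Hd' : derived act')
  (U : forall (B : alg C) (act : action B A), inC B -> derived act -> B -> Act)
  (HU : forall B act HB Hd, Ucompat act' act (U B act HB Hd)) (x : Expr A) :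
  forall l, sigU l x = genSig act' (omegas l (ev U x)) /\
            negU l x = genSig act' (omegas l (aneg (ev U x))).
Proof.
  induction x as [B act HB Hd b| |x1 IH1 x2 IH2|x IH|w x IH|o x1 IH1 x2 IH2]; intro l;
    cbn [sigU negU ev].
  - pose proof (proj1 (HU B act HB Hd)) as Hm. split.
    + rewrite <- (om_morph (f := U B act HB Hd) l b Hm), (genSig_phi (HU B act HB Hd)). reflexivity.
    + destruct Hm as (Hm0 & HmN & Hrest).
      rewrite <- HmN, <- (om_morph (f := U B act HB Hd) l _ (proj1 (HU B act HB Hd))),
        (genSig_phi (HU B act HB Hd)). reflexivity.
  - rewrite (m_neg0 HAct), (om_0 HAct), (G0 HAct Hd'). split; reflexivity.
  - rewrite (proj1 (IH1 l)), (proj1 (IH2 l)), (proj2 (IH1 l)), (proj2 (IH2 l)).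
    rewrite (m_negD HAct), !(om_add HAct), !(Gadd HAct Hd'). split; reflexivity.
  - rewrite (proj1 (IH l)), (proj2 (IH l)), (m_negK HAct). split; reflexivity.
  - rewrite (proj1 (IH (l ++ [w]))), (proj2 (IH (l ++ [w]))), !om_app. cbn [omegas fold_right].
    rewrite (m_unN HAct). split; reflexivity.
  - rewrite (proj1 (IH1 l)), (proj1 (IH2 nil)).
    rewrite (om_neg HAct), (om_bin HAct), (Gnegbin HAct Hd'), (Gbin HAct Hd'). split; reflexivity.
Qed.

Definition psiD {C : CI} {A Act : alg C} (act' : action Act A) (HAct : inC Act) (Hd' : derived act')
  (y : Act) : BA A := mkB (egen act' HAct Hd' y).
Arguments psiD : simpl never.

Lemma part1 (C : CI) (A : alg C) (HA : inC A) : has_actor A -> inC (semidirect (canon A)).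
Proof.
  intros (Act & d' & act' & Hx & Huniv).
  destruct Hx as (_ & HAct & _ & Hd' & _).
  assert (Uex : forall (B : alg C) (act : action B A), inC B -> derived act ->
                 {phi : B -> Act | Ucompat act' act phi}).
  { intros B act HB Hd. apply constructive_indefinite_description.
    destruct (Huniv B act HB Hd) as [phi [Hphi _]]. exists phi. exact Hphi. }
  set (U := fun B act HB Hd => proj1_sig (Uex B act HB Hd)).
  assert (HU : forall B act HB Hd, Ucompat act' act (U B act HB Hd))
    by (intros; unfold U; apply proj2_sig).
  pose proof (ev_thm HAct Hd' U HU) as EV.
  set (psi := @psiD C A Act act' HAct Hd').
  assert (Dpsi : forall y, proj1_sig (psi y) = genSig act' y) by reflexivity.
  assert (psi0 : psi azero = azero).
  { apply Beq. rewrite Dpsi. apply (G0 HAct Hd'). }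
  assert (psiadd : forall y y', psi (aadd y y') = aadd (psi y) (psi y')).
  { intros. apply Beq. rewrite D_add, !Dpsi. apply (Gadd HAct Hd'). }
  assert (psibin : forall o y y', psi (abin o y y') = abin o (psi y) (psi y')).
  { intros. apply Beq. rewrite D_bin, !Dpsi. apply (Gbin HAct Hd'). }
  assert (Erep : forall y, genSig act' (ev U (rep (psi y))) = genSig act' y).
  { intro y. transitivity (proj1_sig (psi y)); [|apply Dpsi].
    rewrite <- sigE_rep. unfold sigE. rewrite (proj1 (EV _ nil)). reflexivity. }
  assert (psineg : forall y, psi (aneg y) = aneg (psi y)).
  { intro y. apply Beq. rewrite Dpsi.
    change (genSig act' (aneg y) = negU nil (rep (psi y))).
    rewrite (proj2 (EV _ nil)). cbn [omegas fold_right].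
    apply (Gneg HAct Hd'). symmetry. apply Erep. }
  assert (psiun : forall w y, psi (aun w y) = aun w (psi y)).
  { intros w y. apply Beq. rewrite Dpsi.
    change (genSig act' (aun w y) = sigU [w] (rep (psi y))).
    rewrite (proj1 (EV _ [w])). cbn [omegas fold_right].
    apply (Gun HAct Hd'). symmetry. apply Erep. }
  assert (psisurj : forall s, exists y, psi y = s).
  { intro s. exists (ev U (rep s)). apply Beq. rewrite Dpsi.
    transitivity (sigE (rep s)); [|apply sigE_rep]. unfold sigE.
    rewrite (proj1 (EV _ nil)). reflexivity. }
  assert (HSA : inC (semidirect act')).
  { destruct Hd' as (E&HE&p&i&s&Hp&Hi&Hs&Hinj&Hker&Hps&Hdot&Hop).
    pose proof Hi as Him. pose proof Hs as Hsm.
    destruct Hi as (Hi0&HiN&HiD&HiU&HiB); destruct Hs as (Hs0&HsN&HsD&HsU&HsB).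
    set (iota := fun q : semidirect act' => aadd (i (snd q)) (s (fst q))).
    apply (@models_inj C (semidirect act') E iota); auto.
    - repeat split.
      + unfold iota; cbn [fst snd]. rewrite SD_zero; cbn [fst snd].
        rewrite Hi0, Hs0, (m_0l HE). reflexivity.
      + intros [b a]. unfold iota. rewrite SD_neg. cbn [fst snd].
        rewrite HiN, Hdot, HsN, (m_negK HE).
        rewrite !(m_negD HE), !(m_negK HE), !(m_assoc HE), (m_Nr HE), (m_0r HE). reflexivity.
      + intros [b a] [b' a']. unfold iota. rewrite SD_add. cbn [fst snd].
        rewrite HiD, Hdot, HsD, !(m_assoc HE), (m_addKN HE). reflexivity.
      + intros w [b a]. unfold iota. rewrite SD_un. cbn [fst snd].
        rewrite HiU, HsU, (m_unadd HE). reflexivity.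
      + intros o [b a] [b' a']. unfold iota. rewrite SD_bin. cbn [fst snd].
        rewrite !HiD, !HiB, !Hop, HsB, (m_flip HE), (m_distl HE), !(m_distr HE), !(m_assoc HE).
        reflexivity.
    - intros [b a] [b' a']. unfold iota; cbn [fst snd]. intro Heq.
      assert (Hp0 : forall a0, p (i a0) = azero) by (intro a0; apply Hker; exists a0; reflexivity).
      pose proof (proj1 (proj2 (proj2 Hp))) as HpD.
      pose proof (f_equal p Heq) as Hb. rewrite ?HpD, ?Hp0, ?Hps, !(m_0l HAct) in Hb. subst b'.
      apply (m_cancel_r HE) in Heq. apply Hinj in Heq. subst. reflexivity. }
  set (Phi := fun q : semidirect act' => ((psi (fst q), snd q) : semidirect (canon A))).
  apply (@models_surj C (semidirect act') (semidirect (canon A)) Phi); auto.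
  - repeat split.
    + unfold Phi. rewrite SD_zero. cbn [fst snd]. rewrite psi0. reflexivity.
    + intros [b a]. unfold Phi. rewrite SD_neg. cbn [fst snd]. rewrite (SD_neg (canon A)).
      rewrite <- psineg. reflexivity.
    + intros [b a] [b' a']. unfold Phi. rewrite SD_add. cbn [fst snd]. rewrite (SD_add (canon A)).
      rewrite <- psiadd. reflexivity.
    + intros w [b a]. unfold Phi. rewrite SD_un. cbn [fst snd]. rewrite (SD_un (canon A)).
      rewrite <- psiun. reflexivity.
    + intros o [b a] [b' a']. unfold Phi. rewrite SD_bin. cbn [fst snd]. rewrite (SD_bin (canon A)).
      rewrite <- psibin. reflexivity.
  - intros [s a]. destruct (psisurj s) as [y Ey]. exists (y, a). unfold Phi. cbn [fst snd].
    rewrite Ey. reflexivity.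
Qed.

Theorem theorem3p6 (C : CI) (A : alg C) (HA : inC A) :
  (has_actor A <-> inC (semidirect (canon A))) /\
  (inC (semidirect (canon A)) ->
     exists d : A -> BA A,
       (forall a, proj1_sig (d a) = dSig a) /\ is_actor d (canon A)).
Proof.
  split.
  - split.
    + apply part1; auto.
    + intro HS. exists (BA A), (dmap HA), (canon A). apply part2; auto.
  - intro HS. exists (dmap HA). split.
    + intro a. reflexivity.
    + apply part2; auto.
Qed.
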